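(* Consider $\mathbb{Z}$ with the metric $d(x,y)=|x-y|$ and the $c_1$-adjacency (i.e., $x,y$ are adjacent iff $|x-y|=1$). Let $S,T:\mathbb{Z}\to\mathbb{Z}$ be such that $x\neq y$ implies $d(S(x),S(y))<d(T(x),T(y))$. If $T$ is $c_1$-continuous, then $S$ is a constant function.
   Context: A function $f:(X,\kappa)\to(Y,\lambda)$ between digital images (sets of lattice points with adjacency relations) is $(\kappa,\lambda)$-continuous iff whenever $x$ and $x'$ are $\kappa$-adjacent in $X$, either $f(x)=f(x')$ or $f(x)$ and $f(x')$ are $\lambda$-adjacent in $Y$. Here $c_1$-continuous means $(c_1,c_1)$-continuous. *)

(* Defs.v *)
From Stdlib Require Import ZArith.
Open Scope Z_scope.

Definition dZ (x y : Z) : Z := Z.abs (x - y).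

Definition c1_adj (x y : Z) : Prop := Z.abs (x - y) = 1.

Definition c1_continuous (f : Z -> Z) : Prop :=
  forall x x' : Z, c1_adj x x' -> f x = f x' \/ c1_adj (f x) (f x').

(* Main.v *)
Require Import Defs.
From Stdlib Require Import ZArith Lia.
Open Scope Z_scope.

Theorem proposition6p4 (S T : Z -> Z)
  (hST : forall x y : Z, x <> y -> dZ (S x) (S y) < dZ (T x) (T y))
  (hT : c1_continuous T) :
  forall x y : Z, S x = S y.
Proof.
  assert (step : forall x, S (x + 1) = S x).
  { intro x. assert (hx : x + 1 <> x) by lia.
    specialize (hST _ _ hx).
    assert (ha : c1_adj (x + 1) x) by (unfold c1_adj; lia).
    destruct (hT _ _ ha) as [E|E]; unfold dZ, c1_adj in *.
    - rewrite E in hST. rewrite Z.sub_diag in hST. simpl in hST.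
      pose proof (Z.abs_nonneg (S (x+1) - S x)). lia.
    - rewrite E in hST. pose proof (Z.abs_nonneg (S (x+1) - S x)).
      assert (Z.abs (S (x + 1) - S x) = 0) by lia. lia. }
  assert (fw : forall x n, 0 <= n -> S (x + n) = S x).
  { intros x n hn. pattern n. apply Z.right_induction with (z := 0); auto.
    - intros a b e. subst. tauto.
    - now rewrite Z.add_0_r.
    - intros m hm IH. cbv beta in *. replace (x + Z.succ m) with (x + m + 1) by lia. rewrite step. exact IH. }
  intros x y. destruct (Z.le_ge_cases x y).
  - replace y with (x + (y - x)) by lia. symmetry. apply fw. lia.
  - replace x with (y + (x - y)) by lia. apply fw. lia.
Qed.
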